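(* Let $2\leq k<n$ and let $A$ and $B$ be self-adjoint linear operators on an $n$-dimensional complex inner product space (equivalently, Hermitian $n\times n$ matrices). Suppose that for every $s=2,\ldots,k$, $$\lambda_s(A)+\lambda_n(B)=\lambda_s(A+B).$$ Then there exist $k-1$ nonzero, pairwise orthogonal vectors $\mathbf{x}^1,\ldots,\mathbf{x}^{k-1}$ such that for every $s=2,\ldots,k$, $$A\mathbf{x}^{s-1}=\lambda_s(A)\mathbf{x}^{s-1},\quad B\mathbf{x}^{s-1}=\lambda_n(B)\mathbf{x}^{s-1},\quad (A+B)\mathbf{x}^{s-1}=\lambda_s(A+B)\mathbf{x}^{s-1}.$$
   Context: For a self-adjoint operator (Hermitian matrix) $M$ of order $n$, its eigenvalues, counted with multiplicity, are indexed in non-increasing order as $\lambda_1(M)\geq\lambda_2(M)\geq\cdots\geq\lambda_n(M)$. *)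

(* Defs.v *)
From HB Require Import structures.
From mathcomp Require Import all_boot all_order all_algebra.
Set Implicit Arguments. Unset Strict Implicit. Unset Printing Implicit Defensive.
Import Order.TTheory GRing.Theory Num.Theory.
Local Open Scope ring_scope.

(* [eigen_seq A s] : s is the list of eigenvalues of the square matrix A,
   counted with multiplicity (the roots of the characteristic polynomial),
   listed in non-increasing order: s`_0 >= s`_1 >= ... >= s`_(n-1).
   Thus lambda_i(A) (1-based, as in the paper) is s`_(i-1). *)
Definition eigen_seq (C : numClosedFieldType) (n : nat) (A : 'M[C]_n) (s : seq C) : Prop :=
  [/\ size s = n,
      char_poly A = \prod_(x <- s) ('X - x%:P)
    & sorted (fun x y => y <= x) s].

Definition cdot (C : numClosedFieldType) (n : nat) (u v : 'cV[C]_n) : C :=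
  ((map_mx Num.conj v)^T *m u) 0 0.

(* Main.v *)
Require Import Defs.
From HB Require Import structures.
From mathcomp Require Import all_boot all_order all_algebra.
From mathcomp Require Import zify.
Import Order.TTheory GRing.Theory Num.Theory.
Local Open Scope ring_scope.
Local Open Scope sesquilinear_scope.
Set Implicit Arguments. Unset Strict Implicit. Unset Printing Implicit Defensive.

Section Helpers.
Variable C : numClosedFieldType.

Lemma char_poly_conj n (P M : 'M[C]_n) : P \in unitmx ->
  char_poly (invmx P *m M *m P) = char_poly M.
Proof.
move=> Pu; rewrite /char_poly /char_poly_mx.
have -> : 'X%:M - map_mx polyC (invmx P *m M *m P) =
   map_mx polyC (invmx P) *m ('X%:M - map_mx polyC M) *m map_mx polyC P.
  rewrite mulmxBr mulmxBl !map_mxM; congr (_ - _).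
  by rewrite scalar_mxC -mulmxA -map_mxM mulVmx // map_mx1 mulmx1.
rewrite !det_mulmx !det_map_mx mulrC mulrA -rmorphM.
by rewrite -det_mulmx mulmxV // det1 rmorph1 mul1r.
Qed.

Lemma herm_adj n (A : 'M[C]_n) : A \is hermsymmx -> A ^t Num.conj = A.
Proof. by move/is_hermitianmxP => {2}->; rewrite expr0 scale1r. Qed.

Lemma unitary_tK n (P : 'M[C]_n) : P \is unitarymx -> P ^t Num.conj *m P = 1%:M.
Proof. by move=> Pu; rewrite -[P ^t Num.conj]mul1mx mulmxKtV. Qed.

Lemma tstar_mul m p q (X : 'M[C]_(m,p)) (Y : 'M[C]_(p,q)) :
  (X *m Y) ^t Num.conj = Y ^t Num.conj *m X ^t Num.conj.
Proof. by rewrite trmx_mul map_mxM. Qed.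

Lemma tstarK m p (X : 'M[C]_(m,p)) : X ^t Num.conj ^t Num.conj = X.
Proof. exact: trmxCK. Qed.


Lemma spec_decomp n (H : 'M[C]_n) : H \is hermsymmx ->
  H = (spectralmx H) ^t Num.conj *m diag_mx (spectral_diag H) *m spectralmx H.
Proof.
move=> Hh; have /orthomx_spectralP {1}-> := hermitian_normalmx Hh.
by rewrite invmx_unitary // spectral_unitarymx.
Qed.

Definition dseq n (d : 'rV[C]_n) := [seq d 0 i | i <- enum 'I_n].

Lemma spec_perm n (H : 'M[C]_n) ls : H \is hermsymmx -> eigen_seq H ls ->
  perm_eq ls (dseq (spectral_diag H)).
Proof.
move=> Hh [_ Hc _]; apply: prod_XsubC_eq; rewrite -Hc.
have /orthomx_spectralP {1}-> := hermitian_normalmx Hh.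
rewrite char_poly_conj ?spectral_unit // char_poly_trig ?diag_mx_is_trig //.
rewrite /dseq big_map big_enum /=; apply: eq_bigr => i _.
by rewrite mxE eqxx mulr1n.
Qed.

Lemma spec_real n (H : 'M[C]_n) i : H \is hermsymmx -> spectral_diag H 0 i \is Num.real.
Proof. by move=> /hermitian_spectral_diag_real /mxOverP; apply. Qed.

Lemma dseq_mem n (d : 'rV[C]_n) i : d 0 i \in dseq d.
Proof. by apply: map_f; rewrite mem_enum. Qed.

Lemma count_dseq n (d : 'rV[C]_n) (p : pred C) :
  count p (dseq d) = #|[set i | p (d 0 i)]|.
Proof.
rewrite /dseq count_map cardE -size_filter enumT /enum_mem.
by congr size; apply: eq_filter => i; rewrite !inE.
Qed.


Lemma quad_form n (P : 'M[C]_n) (d y : 'rV[C]_n) :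
  (y *m (P ^t Num.conj *m diag_mx d *m P) *m y ^t Num.conj) 0 0 =
  \sum_i d 0 i * ((y *m P ^t Num.conj) 0 i * ((y *m P ^t Num.conj) 0 i)^*).
Proof.
have -> : y *m (P ^t Num.conj *m diag_mx d *m P) *m y ^t Num.conj =
  (y *m P ^t Num.conj) *m diag_mx d *m (y *m P ^t Num.conj) ^t Num.conj.
  by rewrite tstar_mul tstarK !mulmxA.
rewrite mxE; apply: eq_bigr => j _; rewrite mul_mx_diag !mxE.
by rewrite [_ * d 0 j]mulrC -mulrA.
Qed.

Lemma psd_zero n (P : 'M[C]_n) (d y : 'rV[C]_n) :
  let z := y *m P ^t Num.conj in
  (forall i, 0 <= d 0 i * (z 0 i * (z 0 i)^*)) ->
  \sum_i d 0 i * (z 0 i * (z 0 i)^*) <= 0 ->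
  y *m (P ^t Num.conj *m diag_mx d *m P) = 0.
Proof.
move=> z Hge Hsum.
have Hs : \sum_i d 0 i * (z 0 i * (z 0 i)^*) == 0.
  by rewrite eq_le Hsum sumr_ge0.
have H0 := psumr_eq0P (fun i _ => Hge i) (eqP Hs).
have Hz : z *m diag_mx d = 0.
  apply/rowP => j; rewrite mul_mx_diag [RHS]mxE mxE -/z.
  have /eqP := H0 j isT.
  rewrite mulf_eq0 mul_conjC_eq0 => /orP[] /eqP ->; by rewrite ?mulr0 ?mul0r.
by rewrite !mulmxA -/z Hz mul0mx.
Qed.

Lemma shift_decomp n (P : 'M[C]_n) (d : 'rV[C]_n) t : P \is unitarymx ->
  P ^t Num.conj *m diag_mx d *m P - t%:M =
  P ^t Num.conj *m diag_mx (d - const_mx t) *m P.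
Proof.
move=> Pu; rewrite linearB /= diag_const_mx mulmxBr mulmxBl.
by rewrite mul_mx_scalar -scalemxAl unitary_tK // scalemx1.
Qed.


Definition Q n (H : 'M[C]_n) s (y : 'rV[C]_n) :=
  (y *m (H - s%:M) *m y ^t Num.conj) 0 0.

Definition zc n (H : 'M[C]_n) (y : 'rV[C]_n) := y *m (spectralmx H) ^t Num.conj.

Lemma QE n (H : 'M[C]_n) s y : H \is hermsymmx ->
  Q H s y = \sum_i (spectral_diag H - const_mx s) 0 i *
     (zc H y 0 i * (zc H y 0 i)^*).
Proof.
move=> Hh; rewrite /Q {1}(spec_decomp Hh) shift_decomp ?spectral_unitarymx //.
by rewrite quad_form.
Qed.

Lemma herm_psd n (H : 'M[C]_n) s y : H \is hermsymmx ->
  (forall i, 0 <= (spectral_diag H - const_mx s) 0 i *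
     (zc H y 0 i * (zc H y 0 i)^*)) ->
  Q H s y <= 0 -> y *m H = s *: y.
Proof.
move=> Hh Hge; rewrite QE // => Hle.
have := psd_zero Hge Hle.
rewrite -shift_decomp ?spectral_unitarymx // -spec_decomp //.
by rewrite mulmxBr mul_mx_scalar => /eqP; rewrite subr_eq0 => /eqP.
Qed.

Lemma subcE n (d : 'rV[C]_n) s i : (d - const_mx s) 0 i = d 0 i - s.
Proof. by rewrite !mxE. Qed.

Lemma key n (A B : 'M[C]_n) t b y :
  A \is hermsymmx -> B \is hermsymmx -> t \is Num.real -> b \is Num.real ->
  (forall i, spectral_diag A 0 i \is Num.real) ->
  (forall i, spectral_diag (A + B) 0 i \is Num.real) ->
  (forall i, spectral_diag A 0 i < t -> zc A y 0 i = 0) ->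
  (forall i, b <= spectral_diag B 0 i) ->
  (forall j, t + b < spectral_diag (A + B) 0 j -> zc (A + B) y 0 j = 0) ->
  y *m A = t *: y /\ y *m B = b *: y.
Proof.
move=> Ah Bh tr br rA rC HA HB HC.
have ABh : A + B \is hermsymmx.
  apply/is_hermitianmxP; rewrite expr0 scale1r.
  rewrite -{1}(herm_adj Ah) -{1}(herm_adj Bh).
  by apply/matrixP => i j; rewrite !mxE rmorphD.
have gA : forall i, 0 <= (spectral_diag A - const_mx t) 0 i *
     (zc A y 0 i * (zc A y 0 i)^*).
  move=> i; rewrite subcE; have [lt|] := boolP (spectral_diag A 0 i < t).
    by rewrite HA // mul0r mulr0.
  rewrite -real_leNgt // => le; apply: mulr_ge0; last exact: mul_conjC_ge0.
  by rewrite subr_ge0.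
have gB : forall i, 0 <= (spectral_diag B - const_mx b) 0 i *
     (zc B y 0 i * (zc B y 0 i)^*).
  move=> i; rewrite subcE; apply: mulr_ge0; last exact: mul_conjC_ge0.
  by rewrite subr_ge0.
have gC : Q (A + B) (t + b) y <= 0.
  rewrite QE //; apply: sumr_le0 => j _; rewrite subcE.
  have [lt|] := boolP (t + b < spectral_diag (A + B) 0 j).
    by rewrite HC // mul0r mulr0.
  rewrite -real_leNgt ?realD // => le; apply: mulr_le0_ge0; last exact: mul_conjC_ge0.
  by rewrite subr_le0.
have QAge : 0 <= Q A t y by rewrite QE //; apply: sumr_ge0 => i _; exact: gA.
have QBge : 0 <= Q B b y by rewrite QE //; apply: sumr_ge0 => i _; exact: gB.
have QCE : Q (A + B) (t + b) y = Q A t y + Q B b y.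
  rewrite /Q; have -> : A + B - (t + b)%:M = (A - t%:M) + (B - b%:M).
    by rewrite raddfD /= addrACA opprD.
  by rewrite mulmxDr mulmxDl [in LHS]mxE.
have QAle : Q A t y <= 0 by apply: le_trans gC; rewrite QCE lerDl.
have QBle : Q B b y <= 0 by apply: le_trans gC; rewrite QCE lerDr.
by split; [apply: herm_psd QAle | apply: herm_psd QBle].
Qed.

End Helpers.

Section Sorted.
Variable C : numClosedFieldType.

Lemma sorted_ge (s : seq C) i j : sorted (fun x y => y <= x) s ->
  (i <= j)%N -> (j < size s)%N -> s`_j <= s`_i.
Proof.
move=> ss ij js.
have tr : transitive (fun x y : C => y <= x).
  by move=> x y z h1 h2; apply: le_trans h2 h1.
have := @sorted_leq_nth _ (fun x y : C => y <= x) tr (@lexx _ _) 0 s ss i j.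
by apply => //; rewrite inE (leq_ltn_trans ij js).
Qed.

Lemma count_lt_bound (s : seq C) i :
  sorted (fun x y => y <= x) s -> (i < size s)%N ->
  (count (fun x : C => (x < s`_i)%R) s <= size s - i.+1)%N.
Proof.
move=> ss isz; rewrite -[X in count _ X](cat_take_drop i.+1 s) count_cat.
have -> : count (fun x : C => (x < s`_i)%R) (take i.+1 s) = 0%N.
  apply/eqP; rewrite -leqn0 leqNgt -has_count; apply/hasPn => x /(nthP 0) [j].
  rewrite size_take => jlt <-.
  have jl : (j < i.+1)%N by move: jlt; case: (ltnP i.+1 (size s)) => // H1 H2; exact: leq_trans H2 H1.
  rewrite nth_take // le_gtF //; apply: sorted_ge => //; rewrite -ltnS.
by rewrite add0n -size_drop count_size.
Qed.

Lemma count_gt_bound (s : seq C) i :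
  sorted (fun x y => y <= x) s -> (i < size s)%N ->
  (count (fun x : C => (s`_i < x)%R) s <= i)%N.
Proof.
move=> ss isz; rewrite -[X in count _ X](cat_take_drop i s) count_cat.
have -> : count (fun x : C => (s`_i < x)%R) (drop i s) = 0%N.
  apply/eqP; rewrite -leqn0 leqNgt -has_count; apply/hasPn => x /(nthP 0) [j].
  rewrite size_drop => jlt <-; rewrite nth_drop //.
  rewrite le_gtF //; apply: sorted_ge => //; first by rewrite leq_addr.
  by move: jlt; rewrite ltn_subRL.
by rewrite addn0 (leq_trans (count_size _ _)) // size_take; case: ltnP => // /ltnW.
Qed.

End Sorted.

Section More.
Variable C : numClosedFieldType.

Lemma herm_add n (A B : 'M[C]_n) : A \is hermsymmx -> B \is hermsymmx ->
  A + B \is hermsymmx.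
Proof.
move=> Ah Bh; apply/is_hermitianmxP; rewrite expr0 scale1r.
rewrite -{1}(herm_adj Ah) -{1}(herm_adj Bh).
by apply/matrixP => i j; rewrite !mxE rmorphD.
Qed.

Lemma colsub_entry m n p (y : 'rV[C]_m) (X : 'M[C]_(m, n)) (g : 'I_p -> 'I_n) r :
  (y *m colsub g X) 0 r = (y *m X) 0 (g r).
Proof. by rewrite !mxE; apply: eq_bigr => l _; rewrite mxE. Qed.

Lemma tstarZ m p a (Y : 'M[C]_(m, p)) : (a *: Y) ^t Num.conj = a^* *: Y ^t Num.conj.
Proof. by apply/matrixP => i j; rewrite !mxE rmorphM. Qed.

Lemma eig_col n (H : 'M[C]_n) (y : 'rV[C]_n) a : H \is hermsymmx -> a \is Num.real ->
  y *m H = a *: y -> H *m y ^t Num.conj = a *: y ^t Num.conj.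
Proof.
move=> Hh ar e; rewrite -{1}(herm_adj Hh) -tstar_mul e tstarZ conj_Creal //.
Qed.

Lemma cdotE n (u v : 'rV[C]_n) :
  cdot (u ^t Num.conj) (v ^t Num.conj) = (v *m u ^t Num.conj) 0 0.
Proof.
rewrite /cdot !mxE; apply: eq_bigr => l _; rewrite !mxE conjCK mulrC.
done.
Qed.

End More.

Theorem proposition1 (C : numClosedFieldType) (n k : nat) (A B : 'M[C]_n)
    (la lb lab : seq C) :
  (2 <= k)%N -> (k < n)%N ->
  A \is hermsymmx -> B \is hermsymmx ->
  eigen_seq A la -> eigen_seq B lb -> eigen_seq (A + B) lab ->
  (forall s : nat, (2 <= s <= k)%N ->
     la`_(s.-1) + lb`_(n.-1) = lab`_(s.-1)) ->
  exists x : 'I_k.-1 -> 'cV[C]_n,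
    [/\ forall i, x i != 0,
        forall i j, i != j -> cdot (x i) (x j) = 0
      & forall i : 'I_k.-1,
          [/\ A *m x i = la`_i.+1 *: x i,
              B *m x i = lb`_(n.-1) *: x i
            & (A + B) *m x i = lab`_i.+1 *: x i]].
Proof.
move=> k2 kn Ah Bh eA eB eAB hyp.
have ABh := herm_add Ah Bh.
have pA := spec_perm Ah eA; have pB := spec_perm Bh eB; have pC := spec_perm ABh eAB.
case: eA => szA _ sA; case: eB => szB _ sB; case: eAB => szC _ sC.
set b := lb`_n.-1.
have memreal : forall (H : 'M[C]_n) ls x, H \is hermsymmx ->
    perm_eq ls (dseq (spectral_diag H)) -> x \in ls -> x \is Num.real.
  move=> H ls x Hh p; rewrite (perm_mem p) => /mapP [j _ ->]; exact: spec_real.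
have breal : b \is Num.real.
  by apply: (memreal B lb) => //; apply: mem_nth; rewrite szB; lia.
have ble : forall j, b <= spectral_diag B 0 j.
  move=> j; have : spectral_diag B 0 j \in lb by rewrite (perm_mem pB) dseq_mem.
  move=> /(nthP 0) [m mlt <-]; apply: sorted_ge => //; rewrite szB in mlt *; lia.
pose f (t : C) := index t (behead la).
pose c (t : C) := lab`_(f t).+1.
pose S1 (t : C) := [set j : 'I_n | spectral_diag A 0 j < t].
pose S2 (t : C) := [set j : 'I_n | c t < spectral_diag (A + B) 0 j].
pose M (t : C) := row_mx
   (colsub (fun r : 'I_#|S1 t| => enum_val r) ((spectralmx A) ^t Num.conj))
   (colsub (fun r : 'I_#|S2 t| => enum_val r) ((spectralmx (A + B)) ^t Num.conj)).
pose K (t : C) := kermx (M t).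
pose G (t : C) := schmidt (row_base (K t)).
have Gu : forall t, G t \is unitarymx.
  by move=> t; apply: schmidt_unitarymx; apply: rank_leq_col.
have GK : forall t, (G t <= K t)%MS.
  by move=> t; rewrite /G eqmx_schmidt_free ?row_base_free // eq_row_base.
have Hi : forall i : 'I_k.-1, [/\ (f (la`_i.+1)%R <= i)%N,
    la`_(f (la`_i.+1)).+1 = la`_i.+1 & la`_i.+1 \is Num.real].
  move=> i; have ik : (i < k.-1)%N := ltn_ord i.
  have isz : (i < size (behead la))%N by rewrite size_behead szA; lia.
  have tE : la`_i.+1 = (behead la)`_i by rewrite nth_behead.
  split.
  - by rewrite /f tE index_nth.
  - by rewrite -nth_behead /f nth_index // tE mem_nth.
  - by apply: (memreal A la) => //; apply: mem_nth; rewrite szA; lia.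
have Hct : forall i : 'I_k.-1, c (la`_i.+1) = la`_i.+1 + b.
  move=> i; have [fi ft tr] := Hi i; have ik : (i < k.-1)%N := ltn_ord i.
  have h2 : (2 <= (f (la`_i.+1)%R).+2 <= k)%N by apply/andP; split => //; lia.
  by rewrite /c -(hyp _ h2) /= ft.
have Hy : forall (i : 'I_k.-1) (y : 'rV[C]_n), (y <= K (la`_i.+1))%MS ->
    y *m A = la`_i.+1 *: y /\ y *m B = b *: y.
  move=> i y yK; have [fi ft tr] := Hi i; have ct := Hct i.
  have : y *m M (la`_i.+1) = 0 by apply/sub_kermxP.
  rewrite mul_mx_row => /eqP; rewrite row_mx_eq0 => /andP[/eqP y1 /eqP y2].
  apply: (key Ah Bh tr breal) => //.
  - by move=> j; exact: spec_real.
  - by move=> j; exact: spec_real.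
  - move=> j jlt; have jS : j \in S1 (la`_i.+1) by rewrite inE.
    have := colsub_entry y ((spectralmx A) ^t Num.conj)
      (fun r : 'I_#|S1 (la`_i.+1)| => enum_val r) (enum_rank_in jS j).
    by rewrite /= enum_rankK_in // y1 mxE.
  - move=> j jlt; have jS : j \in S2 (la`_i.+1) by rewrite inE ct.
    have := colsub_entry y ((spectralmx (A + B)) ^t Num.conj)
      (fun r : 'I_#|S2 (la`_i.+1)| => enum_val r) (enum_rank_in jS j).
    by rewrite /= enum_rankK_in // y2 mxE.
have Hrank : forall i : 'I_k.-1, (i - f (la`_i.+1)%R < \rank (K (la`_i.+1)%R))%N.
  move=> i; have [fi ft tr] := Hi i; have ik : (i < k.-1)%N := ltn_ord i.
  have c1 : (#|S1 (la`_i.+1)%R| <= n - i.+2)%N.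
    have -> : #|S1 (la`_i.+1)| =
        count (fun x : C => (x < la`_i.+1)%R) (dseq (spectral_diag A)).
      by rewrite count_dseq.
    rewrite -(permP pA) -szA; apply: count_lt_bound => //; rewrite szA; lia.
  have c2 : (#|S2 (la`_i.+1)%R| <= (f (la`_i.+1)%R).+1)%N.
    have -> : #|S2 (la`_i.+1)| =
        count (fun x : C => (c (la`_i.+1) < x)%R) (dseq (spectral_diag (A + B))).
      by rewrite count_dseq.
    rewrite -(permP pC); apply: count_gt_bound => //; rewrite szC; lia.
  rewrite mxrank_ker; have := rank_leq_col (M (la`_i.+1)); lia.
pose y (i : 'I_k.-1) : 'rV[C]_n := row (Ordinal (Hrank i)) (G (la`_i.+1)).
have yK : forall i, (y i <= K (la`_i.+1))%MS.
  by move=> i; apply: submx_trans (GK _); apply: row_sub.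
have yA : forall i, y i *m A = la`_i.+1 *: y i /\ y i *m B = b *: y i.
  by move=> i; apply: Hy; apply: yK.
have yn0 : forall i, y i != 0.
  move=> i; apply/negP => /eqP h.
  have := (row_unitarymxP (Gu (la`_i.+1))) (Ordinal (Hrank i)) (Ordinal (Hrank i)).
  rewrite eqxx -/(y i) dotmxE h mul0mx mxE => /eqP; rewrite eq_sym oner_eq0.
  done.
have Lrow : forall t1 t2, t1 = t2 -> forall (r1 : 'I_(\rank (K t1)))
    (r2 : 'I_(\rank (K t2))), val r1 != val r2 ->
    (row r2 (G t2) *m (row r1 (G t1)) ^t Num.conj) 0 0 = 0.
  move=> t1 t2 <- r1 r2 ne; rewrite -dotmxE (row_unitarymxP (Gu t1)).
  by rewrite -val_eqE eq_sym (negbTE ne).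
exists (fun i => (y i) ^t Num.conj); split.
- move=> i; apply: contra (yn0 i) => /eqP h; apply/eqP.
  rewrite -[y i]tstarK h; apply/matrixP => a a'; rewrite !mxE.
  exact: rmorph0.
- move=> i j ij; rewrite cdotE.
  case: (eqVneq (la`_i.+1) (la`_j.+1)) => E.
    apply: (Lrow _ _ E) => /=.
    have [fi _ _] := Hi i; have [fj _ _] := Hi j.
    rewrite -E in fj *; apply/negP => /eqP h; move/negP: ij; apply.
    apply/eqP; apply: val_inj => /=; move: h fi fj.
    set ff := f _; move: ff => ff; lia.
  have [_ _ tri] := Hi i.
  have [Ai _] := yA i; have [Aj _] := yA j.
  have e1 : (y j *m A *m (y i) ^t Num.conj) 0 0 =
      la`_j.+1 * (y j *m (y i) ^t Num.conj) 0 0.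
    by rewrite Aj -scalemxAl mxE.
  have e2 : (y j *m A *m (y i) ^t Num.conj) 0 0 =
      la`_i.+1 * (y j *m (y i) ^t Num.conj) 0 0.
    by rewrite -mulmxA (eig_col Ah tri Ai) -scalemxAr mxE.
  apply/eqP; have : (la`_j.+1 - la`_i.+1) * (y j *m (y i) ^t Num.conj) 0 0 == 0.
    by rewrite mulrBl -e1 -e2 subrr.
  by rewrite mulf_eq0 subr_eq0 eq_sym (negbTE E).
- move=> i; have [_ _ tr] := Hi i; have [Ai Bi] := yA i.
  have eA' := eig_col Ah tr Ai; have eB' := eig_col Bh breal Bi.
  split => //; rewrite mulmxDl eA' eB' -scalerDl; congr (_ *: _).
  have ik := ltn_ord i.
  have h2 : (2 <= i.+2 <= k)%N by apply/andP; split => //; lia.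
  by have := hyp _ h2.
Qed.
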